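(* Let $A$ be a finite alphabet. If $d: A^n \to A$ is a weakly progressive block map, then the induced sliding block code $\tau_d: A^{\mathbb{N}} \to A^{\mathbb{N}}$ is a local homeomorphism.
   Context: $A$ is a finite set with the discrete topology; $\mathbb{N}=\{1,2,3,\dots\}$; $A^{\mathbb{N}}$ is the space of one-sided infinite sequences over $A$ with the product topology; $A^k$ is the set of words of length $k$. A block map is a function $d: A^n \to A$, and the induced sliding block code $\tau_d: A^{\mathbb{N}}\to A^{\mathbb{N}}$ is defined by $\tau_d(x)_i = d(x_i \cdots x_{i+n-1})$. For $w=w_1\cdots w_{n-1}\in A^{n-1}$ and $m\in\mathbb{N}$, define $p_{d,m}^{w}: A^m\to A^m$ by letting, for $\beta\in A^m$, the $j$-th letter ($1\le j\le m$) of $p_{d,m}^{w}(\beta)$ be $d$ applied to the subword of length $n$ starting at position $j$ of the concatenated word $w\beta$ (so $p_{d,m}^{w}(a\alpha)=d(w_1\cdots w_{n-1}a)\,d(w_2\cdots w_{n-1}a\alpha_1)\cdots$). The block map $d$ is weakly progressive of order $m$ if for every $\mu \in A^n$ and every $\nu \in A^m$ with $d(\mu)= \nu_1$ there exists a unique $a \in A$ such that the equation $p_{d,m}^{\mu_1 \cdots \mu_{n-1}}(a \alpha)=\nu$ has a solution $\alpha \in A^{m-1}$; $d$ is weakly progressive if it is weakly progressive of order $m$ for some $m$. A continuous map $f:X\to Y$ is a local homeomorphism if every $x\in X$ has an open neighborhood $U$ such that $f(U)$ is open in $Y$ and $f:U\to f(U)$ is a homeomorphism. *)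

(* Defs.v *)
From mathcomp Require Import all_boot.
Set Implicit Arguments. Unset Strict Implicit. Unset Printing Implicit Defensive.

Section Defs.
Variable A : finType.

(* A^N : one-sided sequences, indexed from 0 (position i+1 of the paper is i here). *)
Definition seqA := nat -> A.

(* Product topology of the discrete topology on A: U is open iff every point of U
   has a cylinder neighbourhood (agreement on an initial segment) inside U. *)
Definition is_open (U : seqA -> Prop) : Prop :=
  forall x, U x -> exists k, forall y, (forall i, i < k -> y i = x i) -> U y.

Definition image (f : seqA -> seqA) (U : seqA -> Prop) : seqA -> Prop :=
  fun y => exists x, U x /\ f x = y.

Definition rel_open (S W : seqA -> Prop) : Prop :=
  exists O, is_open O /\ forall x, W x <-> (O x /\ S x).

Definition continuous_map (f : seqA -> seqA) : Prop :=
  forall V, is_open V -> is_open (fun x => V (f x)).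

Definition homeo_onto_image (f : seqA -> seqA) (U : seqA -> Prop) : Prop :=
  [/\ (forall y z, U y -> U z -> f y = f z -> y = z),
      (forall V, rel_open (image f U) V -> rel_open U (fun y => U y /\ V (f y)))
    & (forall W, rel_open U W -> rel_open (image f U) (image f W))].

Definition local_homeomorphism (f : seqA -> seqA) : Prop :=
  continuous_map f /\
  forall x, exists U, [/\ is_open U, U x, is_open (image f U) & homeo_onto_image f U].

Variable n : nat.

Definition tau (d : n.-tuple A -> A) (x : seqA) : seqA :=
  fun i => d [tuple x (i + k) | k < n].

(* p_{d,m}^w(beta): j-th letter (0-based) is d applied to the length-n subword of
   w ++ beta starting at position j; m = size beta.  x0 is an irrelevant default
   (all indices used are in range when size w = n-1). *)
Definition pdm (d : n.-tuple A -> A) (x0 : A) (w beta : seq A) : seq A :=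
  [seq d [tuple nth x0 (w ++ beta) (j + k) | k < n] | j <- iota 0 (size beta)].

Definition weakly_progressive_of_order (d : n.-tuple A -> A) (m : nat) : Prop :=
  forall (mu : n.-tuple A) (nu : seq A), size nu = m -> ohead nu = Some (d mu) ->
    exists! a : A, exists alpha : seq A,
      size alpha = m.-1 /\ pdm d (d mu) (take n.-1 mu) (a :: alpha) = nu.

Definition weakly_progressive (d : n.-tuple A -> A) : Prop :=
  exists m, 0 < m /\ weakly_progressive_of_order d m.

End Defs.

(* Main.v *)
Require Import Defs.
From mathcomp Require Import all_boot zify.
From Stdlib Require Import FunctionalExtensionality.
Set Implicit Arguments. Unset Strict Implicit. Unset Printing Implicit Defensive.

Section Proof.
Variables (A : finType) (n : nat) (d : n.-tuple A -> A).
Hypothesis n_gt0 : 0 < n.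

Lemma seq_eq_mkseq (x0 : A) (s : seq A) (z : nat -> A) L :
  size s = L -> (forall l, l < L -> nth x0 s l = z l) -> s = mkseq z L.
Proof.
move=> hs hn; apply: (eq_from_nth (x0:=x0)); first by rewrite size_mkseq.
by move=> i; rewrite hs => hi; rewrite nth_mkseq // hn.
Qed.

Lemma mkseq_eq_in (f g : nat -> A) L :
  (forall l, l < L -> f l = g l) -> mkseq f L = mkseq g L.
Proof.
move=> h; rewrite /mkseq; apply/eq_in_map => l; rewrite mem_iota add0n => /andP[_ hl].
exact: h.
Qed.

Lemma pdm_z x0 (w beta : seq A) (z : nat -> A) :
  size w = n.-1 -> w ++ beta = mkseq z (n.-1 + size beta) ->
  pdm d x0 w beta = mkseq (tau d z) (size beta).
Proof.
move=> hw E; rewrite /pdm /mkseq; apply/eq_in_map => j.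
rewrite mem_iota add0n => /andP[_ hj].
rewrite /tau; congr d; apply: eq_mktuple => k.
rewrite E nth_mkseq //; have := ltn_ord k; lia.
Qed.

Lemma take_mu (z : nat -> A) :
  take n.-1 [tuple z k | k < n] = mkseq z n.-1.
Proof.
apply: (@seq_eq_mkseq (z 0) (take n.-1 [tuple z k | k < n]) z n.-1).
  by rewrite size_takel // size_tuple; lia.
move=> l hl; rewrite nth_take //.
have hl' : l < n by lia.
by rewrite -[l]/(nat_of_ord (Ordinal hl')) nth_mktuple.
Qed.

Lemma d_mu (z : nat -> A) : d [tuple z k | k < n] = tau d z 0.
Proof. by rewrite /tau; congr d; apply: eq_mktuple => k; rewrite add0n. Qed.

Lemma tau_eq (z z' : nat -> A) i i' :
  (forall k, k < n -> z (i + k) = z' (i' + k)) -> tau d z i = tau d z' i'.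
Proof. by move=> h; rewrite /tau; congr d; apply: eq_mktuple => k; apply: h. Qed.

Variable m : nat.
Hypothesis m_gt0 : 0 < m.
Hypothesis WP : weakly_progressive_of_order d m.

Lemma Qz x0 (z : nat -> A) : exists alpha, size alpha = m.-1 /\
  pdm d x0 (mkseq z n.-1) (z n.-1 :: alpha) = mkseq (tau d z) m.
Proof.
exists (mkseq (fun l => z (n + l)) m.-1); split; first by rewrite size_mkseq.
have hs : size (z n.-1 :: mkseq (fun l => z (n + l)) m.-1) = m.
  by rewrite /= size_mkseq; lia.
rewrite -{2}hs; apply: pdm_z; first by rewrite size_mkseq.
rewrite hs; apply: (@seq_eq_mkseq x0 _ _ _); first by rewrite size_cat /= !size_mkseq; lia.
move=> l hl; rewrite nth_cat size_mkseq.
case: ltnP => h1; first by rewrite nth_mkseq.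
case E: (l - n.-1) => [|l'] /=; first by congr z; lia.
rewrite nth_mkseq; last by lia.
congr z; lia.
Qed.


Lemma WPz (z : nat -> A) (nu : seq A) x0 :
  size nu = m -> ohead nu = Some (tau d z 0) ->
  exists a, forall a', (exists alpha, size alpha = m.-1 /\
     pdm d x0 (mkseq z n.-1) (a' :: alpha) = nu) -> a = a'.
Proof.
move=> hs hh.
have [|a [_ hu]] := @WP [tuple z k | k < n] nu hs; first by rewrite d_mu.
exists a => a' [alpha [ha hp]]; apply: hu; exists alpha; split=> //.
rewrite take_mu -hp /pdm; apply/eq_in_map => j.
rewrite mem_iota add0n => /andP[_ hj]; congr d; apply: eq_mktuple => k.
apply: set_nth_default; rewrite size_cat size_mkseq /=; have := ltn_ord k.
move: hj; rewrite /= ; lia.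
Qed.

Lemma inj_local (x x' : nat -> A) K :
  (forall l, l < n.-1 -> x l = x' l) ->
  (forall i, i < K -> tau d x i = tau d x' i) ->
  forall j, j + m < K + n -> x j = x' j.
Proof.
move=> h0 hK j; elim/ltn_ind: j => j IH hj.
case: (ltnP j n.-1) => hjn; first exact: h0.
set i := j - n.-1.
pose xi := fun l => x (i + l); pose xi' := fun l => x' (i + l).
have hnu : size (mkseq (fun l => tau d x (i + l)) m) = m by rewrite size_mkseq.
have hh : ohead (mkseq (fun l => tau d x (i + l)) m) = Some (tau d xi 0).
  case: m m_gt0 => [//|m'] _ /=; congr Some; apply: tau_eq => k; by rewrite /xi add0n addn0.
have [a hu] := WPz (x 0) hnu hh.
have ej : i + n.-1 = j by rewrite /i; lia.
have E1 : mkseq (tau d xi) m = mkseq (fun l => tau d x (i + l)) m.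
  by apply: mkseq_eq_in => l _; apply: tau_eq => k; rewrite /xi addnA.
have -> : x j = a.
  apply/esym/hu; have [alpha [ha hp]] := Qz (x 0) xi.
  exists alpha; split=> //; rewrite -E1 -hp /xi ej //.
have -> // : x' j = a.
apply/esym/hu; have [alpha [ha hp]] := Qz (x 0) xi'.
exists alpha; split=> //.
have -> : mkseq xi n.-1 = mkseq xi' n.-1.
  by apply: mkseq_eq_in => l hl; apply: IH; rewrite /i; lia.
rewrite /xi' ej in hp; rewrite hp.
apply: mkseq_eq_in => l hl; rewrite hK; last by rewrite /i; lia.
by apply: tau_eq => k; rewrite addnA.
Qed.


Definition ext (u : nat -> A) (b : A) := fun l => if l < n.-1 then u l else b.

Lemma surj1 : m = 1 -> forall u c, exists b, tau d (ext u b) 0 = c.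
Proof.
move=> m1 u c.
have inj : injective (fun b => tau d (ext u b) 0).
  move=> b1 b2 /= e.
  have hs : size [:: tau d (ext u b1) 0] = m by rewrite m1.
  have [a hu] := WPz b1 hs (erefl (Some (tau d (ext u b1) 0))).
  have -> : b1 = a.
    symmetry; apply: hu; have [alpha [ha hp]] := Qz b1 (ext u b1).
    exists alpha; split=> //; move: hp; rewrite /ext ltnn m1 => -> //.
  apply: hu; have [alpha [ha hp]] := Qz b1 (ext u b2).
  exists alpha; split=> //.
  have -> : mkseq (ext u b1) n.-1 = mkseq (ext u b2) n.-1.
    by apply: mkseq_eq_in => l hl; rewrite /ext hl.
  move: hp; rewrite {2}/ext ltnn m1 => -> /=; by rewrite e.
have [g _ hg] := injF_bij inj.
by exists (g c); apply: hg.
Qed.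

Section Lift.
Variables x y : nat -> A.
Hypothesis hy0 : y 0 = tau d x 0.

Definition step (i : nat) (w : seq A) : A :=
  odflt (x 0) [pick a | [exists alpha : (m.-1).-tuple A,
     pdm d (x 0) w (a :: alpha) == mkseq (fun l => y (i + l)) m]].

Fixpoint win (i : nat) : seq A :=
  if i is i'.+1 then behead (rcons (win i') (step i' (win i'))) else mkseq x n.-1.

Definition xl (j : nat) : A :=
  if j < n.-1 then x j else step (j - n.-1) (win (j - n.-1)).

Lemma win_eq i : win i = mkseq (fun l => xl (i + l)) n.-1.
Proof.
elim: i => [|i IH] /=.
  by apply: mkseq_eq_in => l hl; rewrite /xl add0n hl.
have hs : step i (win i) = xl (i + n.-1).
  by rewrite /xl ifN; [have -> : i + n.-1 - n.-1 = i by lia|lia].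
rewrite hs IH; apply: (@seq_eq_mkseq (x 0) _ _ _).
  by rewrite size_behead size_rcons size_mkseq.
move=> l hl; rewrite nth_behead nth_rcons size_mkseq.
case: ltnP => h1; first by rewrite nth_mkseq // addSnnS.
have -> : l.+1 = n.-1 by lia.
by rewrite eqxx addSnnS; congr xl; lia.
Qed.

Definition Inv i := exists z : nat -> A,
  (forall l, l < n.-1 -> z l = xl (i + l)) /\ tau d z 0 = y i.

Lemma Inv_step i : Inv i -> tau d xl i = y i /\ Inv i.+1.
Proof.
move=> [z [hz hzy]].
pose nu := mkseq (fun l => y (i + l)) m.
have hnu : size nu = m by rewrite size_mkseq.
have [|a [[alpha [ha hp]] _]] := @WP [tuple z k | k < n] nu hnu.
  by rewrite d_mu hzy /nu; case: m m_gt0 => [|m'] //= _; rewrite addn0.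
have ewin : take n.-1 [tuple z k | k < n] = win i.
  by rewrite take_mu win_eq; apply: mkseq_eq_in.
rewrite ewin in hp.
have hex : [exists alpha : (m.-1).-tuple A,
     pdm d (x 0) (win i) (a :: alpha) == mkseq (fun l => y (i + l)) m].
  apply/existsP; exists (tcast ha (in_tuple alpha)).
  rewrite val_tcast /= -/nu -hp /pdm; apply/eqP/eq_in_map => j.
  rewrite mem_iota add0n => /andP[_ hj]; congr d; apply: eq_mktuple => k.
  apply: set_nth_default; rewrite size_cat /= win_eq size_mkseq; have := ltn_ord k.
  move: hj; rewrite /=; lia.
have hstep : exists alpha' : seq A, size alpha' = m.-1 /\
   pdm d (x 0) (win i) (xl (i + n.-1) :: alpha') = nu.
  rewrite /xl ifN; last by lia.
  have -> : i + n.-1 - n.-1 = i by lia.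
  rewrite /step; case: pickP => [a' /existsP [t /eqP ht] | hnone].
    by exists t; rewrite size_tuple.
  by move: (hnone a); rewrite hex.
have {hstep} [alpha' [ha' hp']] := hstep.
pose s := win i ++ xl (i + n.-1) :: alpha'.
pose z' := nth (x 0) s.
have hss : size s = n.-1 + m by rewrite size_cat win_eq size_mkseq /= ha'; lia.
have hz' : forall l, l < n -> z' l = xl (i + l).
  move=> l hl; rewrite /z' /s nth_cat win_eq size_mkseq.
  case: ltnP => h1; first by rewrite nth_mkseq.
  have -> : l - n.-1 = 0 by lia.
  by rewrite /=; congr xl; lia.
have htau : forall l, l < m -> tau d z' l = y (i + l).
  move=> l hl.
  have : pdm d (x 0) (win i) (xl (i + n.-1) :: alpha') = mkseq (tau d z') m.
    have -> : m = size (xl (i + n.-1) :: alpha') by rewrite /= ha'; lia.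
    apply: pdm_z; first by rewrite win_eq size_mkseq.
    rewrite -/s /z'; have -> : n.-1 + size (xl (i + n.-1) :: alpha') = size s.
      by rewrite hss /= ha'; lia.
    by rewrite mkseq_nth.
  rewrite hp' /nu => /(congr1 (nth (x 0))) /(congr1 (fun f => f l)).
  by rewrite !nth_mkseq.
split.
  rewrite -[i]addn0 -htau // [i + 0]addn0.
  by apply: tau_eq => k hk; rewrite add0n hz'.
case: (ltnP 1 m) => hm.
  exists (fun l => z' l.+1); split.
    by move=> l hl; rewrite hz'; [rewrite addSnnS|lia].
  rewrite -addn1 -htau //; apply: tau_eq => k hk; by rewrite add0n add1n.
have m1 : m = 1 by lia.
have [b hb] := surj1 m1 (fun l => xl (i.+1 + l)) (y i.+1).
exists (ext (fun l => xl (i.+1 + l)) b); split=> //.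
by move=> l hl; rewrite /ext hl.
Qed.

Lemma lift_ok : tau d xl = y /\ forall l, l < n.-1 -> xl l = x l.
Proof.
split; last by move=> l hl; rewrite /xl hl.
have hinv : forall i, Inv i.
  elim=> [|i IH]; last by case: (Inv_step IH).
  by exists x; split=> // l hl; rewrite /xl add0n hl.
apply: functional_extensionality => i; by case: (Inv_step (hinv i)).
Qed.

End Lift.

End Proof.

Lemma tau_cont (A : finType) (n : nat) (d : n.-tuple A -> A) : continuous_map (tau d).
Proof.
move=> V hV x hx; have [k hk] := hV _ hx; exists (k + n) => y hy.
apply: hk => i hi; apply: tau_eq => l hl; apply: hy; lia.
Qed.

Lemma open_map (A : finType) (n : nat) (d : n.-tuple A -> A) m :
  0 < n -> 0 < m -> weakly_progressive_of_order d m ->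
  forall S, is_open S -> forall x, S x -> exists K, forall y,
    (forall i, i < K -> y i = tau d x i) -> exists x'', S x'' /\ tau d x'' = y.
Proof.
move=> n0 m0 WP S hS x hx; have [k hk] := hS x hx.
exists (k + m + 1) => y hy.
have hy0 : y 0 = tau d x 0 by apply: hy; lia.
have [ht hl] := lift_ok n0 m0 WP hy0.
exists (xl d m x y); split=> //.
apply: hk => i hi.
apply: (inj_local n0 m0 WP (K := k + m + 1)) => //.
  by move=> j hj; rewrite ht; apply: hy.
lia.
Qed.

Theorem theorem3p11 (A : finType) (n : nat) (d : n.-tuple A -> A) :
  0 < n -> weakly_progressive d -> local_homeomorphism (tau d).
Proof.
move=> n0 [m [m0 WP]]; split; first exact: tau_cont.
move=> x.
pose U := fun x' : seqA A => forall l, l < n.-1 -> x' l = x l.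
have Uopen : is_open U.
  move=> x' hx'; exists n.-1 => y hy l hl; rewrite hy //; exact: hx'.
have OM := open_map n0 m0 WP.
exists U; split=> //.
- move=> _ [x' [hx' <-]].
  have [K hK] := OM U Uopen x' hx'.
  exists K => y hy; have [x'' [h1 h2]] := hK y hy; by exists x''.
- split.
  + move=> y z hy hz e; apply: functional_extensionality => j.
    apply: (inj_local n0 m0 WP (K := j + m + 1)); last lia.
      by move=> l hl; rewrite hy // hz.
    by move=> i _; rewrite e.
  + move=> V [O [hO hV]].
    exists (fun y => O (tau d y)); split; first exact: tau_cont.
    move=> y; split.
      by move=> [hy /hV [hO' _]].
    move=> [hO' hy]; split=> //; apply/hV; split=> //; by exists y.
  + move=> W [O [hO hW]].
    exists (Defs.image (tau d) W); split.
      move=> _ [w [hw <-]].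
      have hS : is_open (fun v => O v /\ U v).
        move=> v [hv1 hv2]; have [k1 hk1] := hO v hv1; have [k2 hk2] := Uopen v hv2.
        exists (k1 + k2) => y hy; split; [apply: hk1|apply: hk2] => i hi; apply: hy; lia.
      have [K hK] := OM _ hS w (proj1 (hW w) hw).
      exists K => y hy; have [x'' [h1 h2]] := hK y hy.
      by exists x''; split=> //; apply/hW.
    move=> y; split.
      move=> hy; split=> //; case: hy => w [hw <-]; exists w; split=> //.
      by case: (proj1 (hW w) hw).
    by case.
Qed.
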